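(* A Tychonoff space $X$ is a nowhere almost $P$-space if and only if no non-isolated point of $X$ is an almost $P$-point.
   Context: $C(X)$ is the ring of real-valued continuous functions on $X$; a zero set is $Z(h)=\{x: h(x)=0\}$ with $h\in C(X)$ and a cozero set is its complement. $T''(X)$ is the set of all functions $f\colon X\to\mathbb{R}$ for which there is a dense cozero set $U$ of $X$ with $f|_U$ continuous. $\chi_A$ is the characteristic function of $A\subseteq X$. $X$ is a nowhere almost $P$-space if $\chi_{\{p\}}\in T''(X)$ for all $p\in X$. A point $p\in X$ is an almost $P$-point if every non-empty $G_\delta$-set (equivalently, for Tychonoff $X$, every zero set) containing $p$ has non-empty interior. *)

(* Defs.v *)
From HB Require Import structures.
From mathcomp Require Import all_boot all_order all_algebra.
From mathcomp Require Import all_classical all_reals all_analysis.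
Set Implicit Arguments. Unset Strict Implicit. Unset Printing Implicit Defensive.
Import Order.TTheory GRing.Theory Num.Theory.
Import numFieldTopology.Exports numFieldNormedType.Exports.
Local Open Scope classical_set_scope.
Local Open Scope ring_scope.

Section Defs.
Variables (R : realType) (X : topologicalType).

Definition tychonoff_space : Prop :=
  hausdorff_space X /\
  forall (x : X) (B : set X), closed B -> ~ B x ->
    exists f : X -> R, continuous f /\ f x = 0 /\ (forall y, B y -> f y = 1).

Definition zero_set (A : set X) : Prop :=
  exists h : X -> R, continuous h /\ A = [set x | h x = 0].
Definition cozero_set (U : set X) : Prop :=
  exists h : X -> R, continuous h /\ U = [set x | h x != 0].

Definition T2prime (f : X -> R) : Prop :=
  exists U : set X, cozero_set U /\ dense U /\ {within U, continuous f}.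

Definition chi_pt (p : X) : X -> R := \1_[set p].

Definition nowhere_almost_P_space : Prop :=
  forall p : X, T2prime (chi_pt p).

Definition Gdelta (A : set X) : Prop :=
  exists F : nat -> set X, (forall n, open (F n)) /\ A = \bigcap_n F n.

Definition almost_P_point (p : X) : Prop :=
  forall A : set X, Gdelta A -> A p -> (interior A) !=set0.

End Defs.

(* Main.v *)
Require Import Defs.
From HB Require Import structures.
From mathcomp Require Import all_boot all_order all_algebra.
From mathcomp Require Import all_classical all_reals all_analysis.
Import numFieldTopology.Exports numFieldNormedType.Exports.
Local Open Scope classical_set_scope.
From mathcomp Require Import lra.

Section Helpers.
Import Order.TTheory GRing.Theory Num.Theory.
Local Open Scope ring_scope.
Variables (R : realType) (X : topologicalType).

Lemma inv_trunc_lt (c : R) : 0 < c -> (Num.trunc c^-1).+1%:R^-1 < c.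
Proof.
move=> c0; have h := truncnS_gt (c^-1).
rewrite invf_plt ?posrE ?ltr0Sn //.
Qed.

Fixpoint maxseq (w : nat -> X -> R) (N : nat) (x : X) : R :=
  match N with 0 => 0 | N'.+1 => Num.max (maxseq w N' x) (w N' x) end.

Lemma maxseq_ge0 w N x : 0 <= maxseq w N x.
Proof. elim: N => [|N IH] //=; by rewrite le_max IH. Qed.

Lemma maxseq_ge w N x n : (n < N)%N -> w n x <= maxseq w N x.
Proof.
elim: N => [|N IH] //= ltn; rewrite le_max.
move: ltn; rewrite ltnS leq_eqVlt => /orP[/eqP->|/IH->]; by rewrite ?lexx ?orbT.
Qed.

Lemma maxseq_le w N x c : 0 <= c -> (forall n, (n < N)%N -> w n x <= c) ->
  maxseq w N x <= c.
Proof.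
move=> c0; elim: N => [|N IH] //= h; rewrite ge_max IH ?h //.
by move=> n ltn; apply: h; apply: ltnW.
Qed.

Lemma maxseq_cont w N : (forall n, continuous (w n)) -> continuous (maxseq w N).
Proof.
move=> cw; elim: N => [|N IH] /=; first exact: cst_continuous.
exact: (max_fun_continuous IH (cw N)).
Qed.

Lemma zero_combine (f : nat -> X -> R) : (forall n, continuous (f n)) ->
  exists g : X -> R, continuous g /\ forall x, g x = 0 <-> forall n, f n x = 0.
Proof.
move=> cf.
pose w : nat -> X -> R := fun n x => Num.min `|f n x| (n.+1%:R^-1 : R).
have w0 n x : 0 <= w n x by rewrite /w /= le_min normr_ge0 invr_ge0 ler0n.
have w1 n x : w n x <= n.+1%:R^-1 by rewrite /w /= ge_min lexx orbT.
have w1' n x : w n x <= 1.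
  apply: le_trans (w1 n x) _; rewrite invf_le1 ?ltr0Sn // ler1n //.
have wc n : continuous (w n).
  have -> : w n = (fun x => `|f n x|) \min (fun _ => n.+1%:R^-1 : R) by [].
  apply: min_fun_continuous; last exact: cst_continuous.
  move=> x; apply: (@continuous_comp _ _ _ (f n) Num.norm); first exact: cf.
  exact: norm_continuous.
pose S x := [set w n x | n in [set: nat]].
have hS x : has_ubound (S x) by exists 1 => _ [n _ <-].
have S0 x : S x !=set0 by exists (w 0%N x), 0%N.
pose g x := sup (S x).
have gub n x : w n x <= g x by apply: ub_le_sup => //; exists n.
have gle x c : (forall n, w n x <= c) -> g x <= c.
  by move=> h; apply: ge_sup => // _ [n _ <-].
have glo N x : maxseq w N x <= g x.
  apply: maxseq_le => [|n _ //]; exact: le_trans (w0 0%N x) (gub 0%N x).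
have ghi N x : g x <= maxseq w N x + N.+1%:R^-1.
  apply: gle => n; case: (ltnP n N) => hn.
    apply: le_trans (maxseq_ge w N x n hn) _; rewrite lerDl invr_ge0 ler0n //.
  have := w1 n x; have := maxseq_ge0 w N x.
  have : n.+1%:R^-1 <= N.+1%:R^-1 :> R.
    by rewrite lef_pV2 ?posrE ?ltr0Sn // ler_nat ltnS.
  move: (n.+1%:R^-1 : R) (N.+1%:R^-1 : R) (w n x) (maxseq w N x) => p q r s a b c; lra.
exists g; split.
  move=> x; apply/cvgrPdist_lt => e e0.
  have c0 : 0 < e / 3 by rewrite divr_gt0.
  pose N := Num.trunc (e / 3)^-1.
  have hN := @inv_trunc_lt (e / 3) c0.
  have /cvgrPdist_lt /(_ _ c0) := @maxseq_cont w N wc x.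
  apply: filterS => y hy.
  have := glo N x; have := ghi N x; have := glo N y; have := ghi N y.
  move: hy hN; rewrite -/N !ltr_norml => /andP[h1 h2] hN.
  move: (N.+1%:R^-1 : R) hN => q hN a b c d; apply/andP; split; lra.
move=> x; split.
  move=> gx0 n; apply/eqP; apply: contraT => hn.
  have : 0 < w n x by rewrite /w /= lt_min normr_gt0 hn invr_gt0 ltr0Sn.
  have := gub n x; rewrite gx0 => h1 h2.
  by have := lt_le_trans h2 h1; rewrite ltxx.
move=> h; apply/eqP; rewrite eq_le; apply/andP; split.
  apply: gle => n; rewrite /w /= h normr0 ge_min lexx //.
exact: le_trans (w0 0%N x) (gub 0%N x).
Qed.

End Helpers.

Section Helpers2.
Import Order.TTheory GRing.Theory Num.Theory.
Local Open Scope ring_scope.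
Variables (R : realType) (X : topologicalType).

Lemma loc_const_cont (f : X -> R) :
  (forall x, \forall y \near x, f y = f x) -> continuous f.
Proof.
move=> h x; apply/cvgrPdist_lt => e e0; apply: filterS (h x) => y ->.
by rewrite subrr normr0.
Qed.

Lemma nhs_open (x : X) (V : set X) : nbhs x V ->
  exists O, [/\ open O, O x & O `<=` V].
Proof. rewrite nbhsE; move=> [W [oW Wx] WV]; by exists W. Qed.

Lemma zero_set_Gdelta (h : X -> R) : continuous h -> Gdelta [set x | h x = 0].
Proof.
move=> ch.
exists (fun n => [set x | `|h x| < n.+1%:R^-1]); split.
  move=> n.
  have -> : [set x | `|h x| < n.+1%:R^-1] =
     (fun x => `|h x|) @^-1` [set r : R | (r < n.+1%:R^-1)%R] by [].
  apply: open_comp; last exact: open_lt.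
  move=> x _; apply: (@continuous_comp _ _ _ h Num.norm); first exact: ch.
  exact: norm_continuous.
apply/seteqP; split => x /=.
  by move=> hx0 n _ /=; rewrite hx0 normr0 invr_gt0 ltr0Sn.
move=> hx; apply/eqP; apply: contraT => hx0.
have c0 : 0 < `|h x| by rewrite normr_gt0.
have := hx (Num.trunc (`|h x|^-1)) I => /= h1.
have := @inv_trunc_lt R _ c0 => h2.
by have := lt_trans h1 h2; rewrite ltxx.
Qed.

End Helpers2.

Import Order.TTheory GRing.Theory Num.Theory.

Theorem theorem4p0 (R : realType) (X : topologicalType) :
  tychonoff_space R X ->
  (nowhere_almost_P_space R X <->
   forall p : X, ~ isolated [set: X] p -> ~ almost_P_point p).
Proof.
move=> [hX creg].
have cl1 : forall p : X, closed [set p].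
  by move=> p; apply: accessible_closed_set1; apply: hausdorff_accessible.
have nisoP : forall p : X, ~ isolated [set: X] p ->
    forall O, open O -> O p -> exists y, O y /\ y <> p.
  move=> p np O oO Op; apply: contrapT => hn; apply: np; split.
    by rewrite inE.
  exists O; first by apply: open_nbhs_nbhs.
  rewrite setIT; apply/seteqP; split => y /=.
    by move=> Oy; apply: contrapT => yp; apply: hn; exists y.
  by move->.
split.
- move=> H p np aP.
  have [U [[h [ch ->]] [dU cU]]] := H p.
  case: (eqVneq (h p) 0%R) => hp.
  + have [z Iz] := aP _ (@zero_set_Gdelta R X h ch) hp.
    have [y [Iy Uy]] := dU _ (ex_intro _ z Iz) (@open_interior _ _).
    by move: Uy; rewrite /= (interior_subset Iy) eqxx.
  + have := (subspace_continuousP _ _).1 cU p hp.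
    move=> /cvgrPdist_lt /(_ 1%R ltr01).
    rewrite /within /= => /nhs_open [W [oW Wp WV]].
    have [y [Wy yp]] := nisoP p np W oW Wp.
    have oW' : open (W `&` ~` [set p]) by apply: openI => //; apply: closed_openC.
    have [y' [[Wy' y'p] Uy']] := dU _ (ex_intro _ y (conj Wy yp)) oW'.
    have := WV y' Wy' Uy'.
    rewrite /from_subspace /chi_pt !indicE.
    have -> : (p \in [set p]) = true by apply/mem_set.
    have -> : (y' \in [set p]) = false by apply/memNset.
    by rewrite subr0 normr1 ltxx.
- move=> H p.
  case: (pselect (isolated [set: X] p)) => ip.
  + exists setT; split.
      exists (fun=> 1%R); split; first exact: cst_continuous.
      by apply/seteqP; split => x //= _; apply: oner_neq0.
    split; first by move=> W [x Wx] _; exists x.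
    apply: continuous_subspaceT; apply: (@loc_const_cont R X) => x.
    case: (pselect (x = p)) => [->|xp].
      case: ip => _ [V pV VE]; apply: filterS pV => y Vy.
      have : (V `&` [set: X]) y by split.
      by rewrite VE => ->.
    have : nbhs x (~` [set p]).
      by apply: open_nbhs_nbhs; split; [apply: closed_openC | ].
    apply: filterS => y yp; rewrite /chi_pt !indicE.
    have -> : (y \in [set p]) = false by apply/memNset.
    by have -> : (x \in [set p]) = false by apply/memNset.
  + have naP := H p ip.
    have [A [GA [Ap nA]]] : exists A, Gdelta A /\ A p /\ ~ (interior A !=set0).
      apply: contrapT => hn; apply: naP => A GA Ap; apply: contrapT => ni.
      by apply: hn; exists A.
    have [F [oF AF]] := GA.
    have hf : forall n, exists f : X -> R,
        continuous f /\ f p = 0%R /\ (forall y, (~` F n) y -> f y = 1%R).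
      move=> n; apply: creg; first by apply: open_closedC.
      by move=> /=; apply; move: Ap; rewrite AF; apply.
    pose f n := projT1 (cid (hf n)).
    have fP n : continuous (f n) /\ f n p = 0%R /\
        (forall y, (~` F n) y -> f n y = 1%R) := projT2 (cid (hf n)).
    have [g [cg gz]] := @zero_combine R X f (fun n => (fP n).1).
    have gp : g p = 0%R by apply/gz => n; case: (fP n) => _ [].
    exists [set x | g x != 0%R]; split; first by exists g.
    split.
      move=> W [x Wx] oW; apply: contrapT => hn; apply: nA; exists x.
      suff : W `<=` interior A by apply.
      rewrite -open_subsetE // => y Wy; rewrite AF => n _.
      have gy : g y = 0%R.
        apply/eqP; apply: contraT => gy; exfalso; apply: hn; by exists y.
      have := (gz y).1 gy n => fy.
      apply: contrapT => nF; case: (fP n) => _ [_ /(_ y nF)].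
      by rewrite fy => /esym/eqP; rewrite oner_eq0.
    apply: (@subspace_eq_continuous _ _ _ (fun _ => 0%R)).
      move=> y /set_mem /= gy; rewrite /from_subspace /chi_pt indicE.
      have -> : (y \in [set p]) = false.
        by apply/memNset => yp; move: gy; rewrite yp gp eqxx.
      by [].
    exact: cst_continuous.
Qed.
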